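(* Let $G=A\oplus B$ be an abelian group with $\mathrm{Hom}(B,A)=\{0\}$. Then $G$ is uniformly strongly co-Hopfian if and only if both $A$ and $B$ are uniformly strongly co-Hopfian. Moreover, if $m$ is an Sco-H bound for $A$ and $n$ is an Sco-H bound for $B$, then $m+n$ is an Sco-H bound for $G$.
   Context: All groups are abelian. A group $G$ is uniformly strongly co-Hopfian if there is a fixed $m\in\mathbb N$ such that $\phi^m(G)=\phi^{m+1}(G)$ for every endomorphism $\phi$ of $G$; such an $m$ is called an Sco-H bound for $G$. *)

(* Defs.v *)
From HB Require Import structures.
From mathcomp Require Import all_boot all_algebra.
Set Implicit Arguments. Unset Strict Implicit. Unset Printing Implicit Defensive.
Import GRing.Theory.
Local Open Scope ring_scope.

Definition iter_image (G : zmodType) (phi : G -> G) (k : nat) : G -> Prop :=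
  fun y => exists x : G, iter k phi x = y.

Definition scoH_bound (G : zmodType) (m : nat) : Prop :=
  forall phi : {additive G -> G},
    forall y : G, iter_image phi m y <-> iter_image phi m.+1 y.

Definition unif_strongly_coHopfian (G : zmodType) : Prop :=
  exists m : nat, scoH_bound G m.

(* Main.v *)
Require Import Defs.
From HB Require Import structures.
From mathcomp Require Import all_boot all_algebra.
Import GRing.Theory.
Local Open Scope ring_scope.

Section Aux.
Variables (A B : zmodType).

Definition lftA (phi : {additive A -> A}) (x : A * B) : A * B := (phi x.1, x.2).
Lemma lftA_nmod phi : nmod_morphism (lftA phi).
Proof. split; first by rewrite /lftA /= raddf0.
by move=> [a b] [c d]; rewrite /lftA /= raddfD. Qed.
HB.instance Definition _ phi := GRing.isNmodMorphism.Build _ _ (lftA phi) (lftA_nmod phi).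

Definition lftB (psi : {additive B -> B}) (x : A * B) : A * B := (x.1, psi x.2).
Lemma lftB_nmod psi : nmod_morphism (lftB psi).
Proof. split; first by rewrite /lftB /= raddf0.
by move=> [a b] [c d]; rewrite /lftB /= raddfD. Qed.
HB.instance Definition _ psi := GRing.isNmodMorphism.Build _ _ (lftB psi) (lftB_nmod psi).

Definition alphaf (phi : {additive (A * B) -> (A * B)}) (a : A) : A := (phi (a, 0)).1.
Lemma alphaf_nmod phi : nmod_morphism (alphaf phi).
Proof. split; first by rewrite /alphaf /= -[(0,0)]/(0 : A * B) raddf0.
move=> a c; rewrite /alphaf.
have -> : ((a + c)%R, 0) = ((a,0) + (c,0) : A * B) by apply: injective_projections => /=; rewrite ?addr0.
by rewrite raddfD.
Qed.
HB.instance Definition _ phi := GRing.isNmodMorphism.Build _ _ (alphaf phi) (alphaf_nmod phi).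

Definition deltaf (phi : {additive (A * B) -> (A * B)}) (b : B) : B := (phi (0, b)).2.
Lemma deltaf_nmod phi : nmod_morphism (deltaf phi).
Proof. split; first by rewrite /deltaf /= -[(0,0)]/(0 : A * B) raddf0.
move=> a c; rewrite /deltaf.
have -> : (0, (a + c)%R) = ((0,a) + (0,c) : A * B) by apply: injective_projections => /=; rewrite ?addr0.
by rewrite raddfD.
Qed.
HB.instance Definition _ phi := GRing.isNmodMorphism.Build _ _ (deltaf phi) (deltaf_nmod phi).

Definition betaf (phi : {additive (A * B) -> (A * B)}) (b : B) : A := (phi (0, b)).1.
Lemma betaf_nmod phi : nmod_morphism (betaf phi).
Proof. split; first by rewrite /betaf /= -[(0,0)]/(0 : A * B) raddf0.
move=> a c; rewrite /betaf.
have -> : (0, (a + c)%R) = ((0,a) + (0,c) : A * B) by apply: injective_projections => /=; rewrite ?addr0.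
by rewrite raddfD.
Qed.
HB.instance Definition _ phi := GRing.isNmodMorphism.Build _ _ (betaf phi) (betaf_nmod phi).

End Aux.

Lemma iter_add (G : zmodType) (phi : {additive G -> G}) k x y :
  iter k phi (x + y) = iter k phi x + iter k phi y.
Proof. by elim: k => //= k ->; rewrite raddfD. Qed.

Lemma iter_sub (G : zmodType) (phi : {additive G -> G}) k x y :
  iter k phi (x - y) = iter k phi x - iter k phi y.
Proof. by elim: k => //= k ->; rewrite raddfB. Qed.

Lemma stable (G : zmodType) (phi : {additive G -> G}) m :
  (forall y, iter_image phi m y <-> iter_image phi m.+1 y) ->
  forall j x, exists x', iter m phi x = iter (j + m) phi x'.
Proof.
move=> H; elim=> [|j IH] x; first by exists x.
have [x' ->] := IH x.
have [x'' Hx''] : iter_image phi m.+1 (iter m phi x') by apply/H; exists x'.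
by exists x''; rewrite iterD -Hx'' addSnnS iterD.
Qed.

Section Main.
Variables (A B : zmodType).

Lemma iter_lftA (phi : {additive A -> A}) k (x : A * B) :
  iter k (lftA _ B phi) x = (iter k phi x.1, x.2).
Proof. by case: x => a b; elim: k => //= k ->. Qed.

Lemma iter_lftB (psi : {additive B -> B}) k (x : A * B) :
  iter k (lftB A _ psi) x = (x.1, iter k psi x.2).
Proof. by case: x => a b; elim: k => //= k ->. Qed.

Lemma image_S (G : zmodType) (phi : {additive G -> G}) m y :
  iter_image phi m.+1 y -> iter_image phi m y.
Proof. by move=> [x <-]; exists (phi x); rewrite iterSr. Qed.

Lemma boundA m : scoH_bound (A * B)%type m -> scoH_bound A m.
Proof.
move=> H phi y; split; last exact: image_S.
move=> [x <-].
have : iter_image (lftA _ B phi : {additive (A * B) -> (A * B)}) m (iter m phi x, (0 : B)).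
  by exists (x, 0); rewrite /= iter_lftA.
move/H => [z Hz]; exists z.1.
by have := congr1 fst Hz; rewrite /= iter_lftA.
Qed.

Lemma boundB m : scoH_bound (A * B)%type m -> scoH_bound B m.
Proof.
move=> H phi y; split; last exact: image_S.
move=> [x <-].
have : iter_image (lftB A _ phi : {additive (A * B) -> (A * B)}) m ((0 : A), iter m phi x).
  by exists (0, x); rewrite /= iter_lftB.
move/H => [z Hz]; exists z.2.
by have := congr1 snd Hz; rewrite /= iter_lftB.
Qed.

Variable hBA : forall (f : {additive B -> A}) (b : B), f b = 0.
Variable phi : {additive (A * B) -> (A * B)}.

Lemma beta0 b : (phi (0, b)).1 = 0.
Proof. exact: (hBA (betaf _ _ phi : {additive B -> A}) b). Qed.

Lemma phi_fst x : (phi x).1 = alphaf _ _ phi x.1.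
Proof.
have -> : x = (x.1, 0) + (0, x.2) :> A * B.
  by case: x => a b; apply: injective_projections => /=; rewrite ?addr0 ?add0r.
by rewrite raddfD /= beta0 addr0 addr0.
Qed.

Lemma iter_fst k x : (iter k phi x).1 = iter k (alphaf _ _ phi) x.1.
Proof. by elim: k => //= k <-; rewrite phi_fst. Qed.

Lemma phi_B b : phi (0, b) = (0, deltaf _ _ phi b).
Proof. by apply: injective_projections => //=; rewrite beta0. Qed.

Lemma iter_B k b : iter k phi (0, b) = (0, iter k (deltaf _ _ phi) b).
Proof. by elim: k => //= k ->; rewrite phi_B. Qed.

End Main.

Lemma bound_sum (A B : zmodType) :
  (forall (f : {additive B -> A}) (b : B), f b = 0) ->
  forall m n : nat, scoH_bound A m -> scoH_bound B n ->
     scoH_bound (A * B)%type (m + n)%N.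
Proof.
move=> hBA m n hA hB phi y; split; last exact: image_S.
move=> [x <-].
have [a' Ha'] : iter_image (alphaf _ _ phi) m.+1 (iter m (alphaf _ _ phi) x.1).
  by apply/hA; exists x.1.
set z := iter m phi x - iter m.+1 phi (a', 0).
have z1 : z.1 = 0.
  rewrite /z /= !(iter_fst _ _ hBA) /= -Ha'.
  by rewrite -[phi (iter m phi _)]/(iter m.+1 phi (a', 0)) (iter_fst _ _ hBA) subrr.
have zE : z = (0, z.2) by apply: injective_projections.
have [b3 Hb3] := stable _ _ _ (hB (deltaf _ _ phi)) m.+1 z.2.
exists ((a', 0) + (0, b3)).
rewrite iter_add addnC iterD.
have -> : iter m phi x = z + iter m.+1 phi (a', 0) by rewrite /z subrK.
have E1 : iter n phi z = iter (m.+1 + n) phi (0, b3).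
  rewrite {1}zE !(iter_B _ _ hBA).
  by congr pair; exact: Hb3.
rewrite iter_add E1 -iterD addrC.
have -> : (n + m.+1 = (n + m).+1)%N by rewrite addnS.
by have -> : (m.+1 + n = (n + m).+1)%N by rewrite addSn addnC.
Qed.

Theorem mainTheorem9 (A B : zmodType) :
  (forall (f : {additive B -> A}) (b : B), f b = 0) ->
  (unif_strongly_coHopfian (A * B)%type <->
     unif_strongly_coHopfian A /\ unif_strongly_coHopfian B) /\
  (forall m n : nat, scoH_bound A m -> scoH_bound B n ->
     scoH_bound (A * B)%type (m + n)%N).
Proof.
move=> hBA; split; last exact: bound_sum.
split.
  by move=> [m H]; split; exists m; [exact: boundA _ _ H | exact: boundB _ _ H].
by move=> [[m hA] [n hB]]; exists (m + n)%N; exact: bound_sum.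
Qed.
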